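(* Fix an integer $N\ge1$ and let $\lambda_n=8^n$ for $n\ge1$. Let $(m_n(t))_{n\ge1,t\ge0}$ be the solution of $$\frac{d}{dt}m_n(t)=-\lambda_nm_n(t)m_{n+1}(t),\quad n=1,2,\dots,$$ with $m_n(0)=2^{-n}$ for $n=1,\dots,2N$ and $m_n(0)=0$ for $n>2N$. Then for all $t\ge0$, $$m_{2n}(t)\ge\tfrac12m_{2n}(0)\quad(n\ge1),\qquad m_{2n+1}(t)\le m_{2n+1}(0)\exp\{-4^{2n}t\}\quad(n\ge0).$$
   Context: Since $m_n(0)=0$ for $n>2N$, one has $m_n\equiv0$ for $n>2N$, and the system reduces to a finite system of ODEs with a unique global non-negative solution. *)

(* Defs.v *)
From Stdlib Require Import Reals.
From Coquelicot Require Import Coquelicot.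
Open Scope R_scope.

Definition lam (n : nat) : R := 8 ^ n.

Definition is_solution (m : nat -> R -> R) : Prop :=
  forall n : nat, (1 <= n)%nat ->
    filterlim (m n) (at_right 0) (locally (m n 0)) /\
    (forall t : R, 0 < t -> is_derive (m n) t (- lam n * m n t * m (S n) t)).

Definition initial_data (N : nat) (m : nat -> R -> R) : Prop :=
  (forall n : nat, (1 <= n <= 2 * N)%nat -> m n 0 = (/ 2) ^ n) /\
  (forall n : nat, (2 * N < n)%nat -> m n 0 = 0).

(* Main.v *)
Require Import Defs.
From Stdlib Require Import Reals Lra Lia Arith.
From Coquelicot Require Import Coquelicot.
Open Scope R_scope.

Lemma rc_near (f : R -> R) : filterlim f (at_right 0) (locally (f 0)) ->
  forall eps, 0 < eps -> exists d, 0 < d /\ forall s, 0 < s < d -> Rabs (f s - f 0) < eps.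
Proof.
  intros H eps Heps.
  pose proof (proj1 (filterlim_locally f (f 0)) H (mkposreal eps Heps)) as [d Hd].
  exists d; split; [apply cond_pos|].
  intros s [H1 H2]. specialize (Hd s). simpl in Hd.
  assert (Hb : ball 0 d s).
  { unfold ball; simpl; unfold AbsRing_ball, abs, minus, plus, opp; simpl. rewrite Rabs_right; lra. }
  specialize (Hd Hb H1). unfold ball in Hd; simpl in Hd; unfold AbsRing_ball, abs, minus, plus, opp in Hd; simpl in Hd. exact Hd.
Qed.

Lemma rc_le (f : R -> R) c d : filterlim f (at_right 0) (locally (f 0)) -> 0 < d ->
  (forall s, 0 < s < d -> f s <= c) -> f 0 <= c.
Proof.
  intros H Hd Hs. destruct (Rle_dec (f 0) c) as [|Hn]; auto. exfalso.
  destruct (rc_near f H (f 0 - c)) as [d' [Hd' Hn']]; [lra|].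
  set (s := Rmin d d' / 2).
  assert (0 < s < d /\ s < d') as [Hs1 Hs2].
  { unfold s. pose proof (Rmin_l d d'). pose proof (Rmin_r d d').
    pose proof (Rmin_Rgt_r d d' 0 (conj Hd Hd')). lra. }
  specialize (Hs s Hs1). specialize (Hn' s (conj (proj1 Hs1) Hs2)).
  apply Rabs_def2 in Hn'. lra.
Qed.

Lemma rc_ge (f : R -> R) c d : filterlim f (at_right 0) (locally (f 0)) -> 0 < d ->
  (forall s, 0 < s < d -> c <= f s) -> c <= f 0.
Proof.
  intros H Hd Hs. destruct (Rle_dec c (f 0)) as [|Hn]; auto. exfalso.
  destruct (rc_near f H (c - f 0)) as [d' [Hd' Hn']]; [lra|].
  set (s := Rmin d d' / 2).
  assert (0 < s < d /\ s < d') as [Hs1 Hs2].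
  { unfold s. pose proof (Rmin_l d d'). pose proof (Rmin_r d d').
    pose proof (Rmin_Rgt_r d d' 0 (conj Hd Hd')). lra. }
  specialize (Hs s Hs1). specialize (Hn' s (conj (proj1 Hs1) Hs2)).
  apply Rabs_def2 in Hn'. lra.
Qed.

Lemma mono (f df : R -> R) : (forall x, 0 < x -> is_derive f x (df x)) ->
  (forall x, 0 < x -> 0 <= df x) -> forall x y, 0 < x -> x <= y -> f x <= f y.
Proof.
  intros Hd Hp x y Hx Hxy. destruct (Rle_dec (f x) (f y)) as [|Hn]; auto. exfalso.
  destruct (Req_dec x y) as [->|Hne]; [lra|].
  set (e := (f x - f y) / (y - x)).
  assert (He : 0 < e). { unfold e. apply Rdiv_lt_0_compat; lra. }
  assert (H := incr_function (fun t => f t + e * t) (Finite 0) p_infty (fun t => df t + e)).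
  assert (Hlt : f x + e * x < f y + e * y).
  { apply H; simpl; auto; try lra.
    - intros t Ht _. apply (is_derive_plus f (fun t => e * t) t (df t) e). apply Hd; auto.
      assert (Hs : is_derive (fun t:R => e * t) t (e * 1)) by (apply (is_derive_scal (fun t => t) t e 1); apply (is_derive_id t)).
      rewrite Rmult_1_r in Hs. exact Hs.
    - intros t Ht _. specialize (Hp t Ht). lra. }
  assert (e * (y - x) = f x - f y). { unfold e. field. lra. }
  nra.
Qed.

Lemma sign_core (f g : R -> R) (c : R) :
  filterlim g (at_right 0) (locally (g 0)) ->
  (forall t, 0 < t -> is_derive f t (c * f t * g t)) ->
  (forall t, 0 < t -> ex_derive g t) ->
  exists C d B, 0 < d /\ forall t, 0 < t -> exists G, f t = C * exp G /\ (t < d -> Rabs G <= B).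
Proof.
  intros Hg Hf Hgd.
  set (a := fun t => c * g t).
  assert (Ha : forall t, 0 < t -> continuous a t).
  { intros t Ht. apply (continuous_mult (fun _ => c) g). apply continuous_const.
    apply (ex_derive_continuous (K:=R_AbsRing) (V:=R_NormedModule) g). auto. }
  destruct (rc_near g Hg 1 Rlt_0_1) as [d [Hd Hgb]].
  set (K := Rabs c * (Rabs (g 0) + 1)).
  assert (HaK : forall s, 0 < s < d -> Rabs (a s) <= K).
  { intros s Hs. unfold a, K. rewrite Rabs_mult. apply Rmult_le_compat_l. apply Rabs_pos.
    specialize (Hgb s Hs). pose proof (Rabs_triang_inv (g s) (g 0)). lra. }
  set (c0 := d / 2).
  set (G := fun t => RInt a c0 t).
  assert (Hex : forall t, 0 < t -> ex_RInt a c0 t).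
  { intros t Ht. apply (ex_RInt_continuous (V:=R_CompleteNormedModule)). intros z Hz. apply Ha.
    destruct Hz as [Hz _]. pose proof (Rmin_Rgt_r c0 t 0). unfold c0 in *. lra. }
  assert (HG : forall t, 0 < t -> is_derive G t (a t)).
  { intros t Ht. apply (is_derive_RInt a G c0 t).
    - assert (Ht2 : 0 < t / 2) by lra. exists (mkposreal _ Ht2). intros b Hb.
      unfold G. apply (RInt_correct (V:=R_CompleteNormedModule)). apply Hex.
      unfold ball in Hb; simpl in Hb; unfold AbsRing_ball, abs, minus, plus, opp in Hb; simpl in Hb.
      apply Rabs_def2 in Hb. lra.
    - apply Ha; auto. }
  assert (HGb : forall t, 0 < t < d -> Rabs (G t) <= K * d).
  { intros t Ht. unfold G. destruct (Rle_dec c0 t).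
    - eapply Rle_trans. apply abs_RInt_le_const; auto. apply Hex; lra.
      intros s Hs. apply HaK. unfold c0 in *; lra.
      assert (0 <= K). { unfold K. apply Rmult_le_pos. apply Rabs_pos. pose proof (Rabs_pos (g 0)); lra. }
      unfold c0 in *; nra.
    - rewrite <- (opp_RInt_swap (V:=R_CompleteNormedModule)) by (apply (ex_RInt_swap (V:=R_CompleteNormedModule)); apply Hex; lra).
      change (Rabs (- RInt a t c0) <= K * d). rewrite Rabs_Ropp.
      eapply Rle_trans. apply abs_RInt_le_const; [lra| |].
      apply (ex_RInt_swap (V:=R_CompleteNormedModule)). apply Hex; lra.
      intros s Hs. apply HaK. unfold c0 in *; lra.
      assert (0 <= K). { unfold K. apply Rmult_le_pos. apply Rabs_pos. pose proof (Rabs_pos (g 0)); lra. }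
      unfold c0 in *; nra. }
  set (F := fun t => f t * exp (- G t)).
  assert (HF : forall t, 0 < t -> is_derive F t 0).
  { intros t Ht.
    assert (H1 : is_derive (fun t => exp (- G t)) t (scal (opp (a t)) (exp (- G t)))).
    { apply (is_derive_comp exp (fun t => - G t)). apply is_derive_exp.
      apply (is_derive_opp G). auto. }
    pose proof (is_derive_mult f (fun t => exp (- G t)) t _ _ (Hf t Ht) H1) as H2.
    assert (Hc : forall n m : R_AbsRing, mult n m = mult m n). { intros; apply Rmult_comm. }
    specialize (H2 Hc).
    replace 0 with (plus (mult (c * f t * g t) (exp (- G t))) (mult (f t) (scal (opp (a t)) (exp (- G t))))).
    exact H2.
    unfold a. change (c * f t * g t * exp (- G t) + f t * (- (c * g t) * exp (- G t)) = 0). ring. }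
  assert (Hconst : forall t, 0 < t -> F t = F c0).
  { intros t Ht. destruct (Rtotal_order t c0) as [Hlt|[Heq|Hgt]].
    - apply eq_is_derive; auto. intros s Hs. apply HF. lra.
    - subst; auto.
    - symmetry. apply eq_is_derive; auto. intros s Hs. apply HF. unfold c0 in *. lra. }
  exists (F c0), d, (K * d). split; auto. intros t Ht. exists (G t). split.
  - rewrite <- (Hconst t Ht). unfold F. rewrite Rmult_assoc, <- exp_plus.
    replace (- G t + G t) with 0 by ring. rewrite exp_0. ring.
  - intros Htd. apply HGb. lra.
Qed.

Lemma Rabs_le_inv x B : Rabs x <= B -> - B <= x <= B.
Proof. intros H. pose proof (Rle_abs x). pose proof (Rle_abs (-x)). rewrite Rabs_Ropp in H1. lra. Qed.

Lemma exp_mono_le x y : x <= y -> exp x <= exp y.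
Proof. intros [H|H]; [left; apply exp_increasing; auto| subst; lra]. Qed.

Lemma sign_lemma (f g : R -> R) (c : R) :
  filterlim f (at_right 0) (locally (f 0)) ->
  filterlim g (at_right 0) (locally (g 0)) ->
  (forall t, 0 < t -> is_derive f t (c * f t * g t)) ->
  (forall t, 0 < t -> ex_derive g t) ->
  (0 <= f 0 -> forall t, 0 <= t -> 0 <= f t) /\ (f 0 <= 0 -> forall t, 0 <= t -> f t <= 0).
Proof.
  intros Hf0 Hg Hf Hgd.
  destruct (sign_core f g c Hg Hf Hgd) as [C [d [B [Hd H]]]].
  split.
  - intros H0 t [Ht|Ht]; [|subst t; auto]. destruct (H t Ht) as [G [-> _]].
    apply Rmult_le_pos; [|left; apply exp_pos].
    destruct (Rle_dec 0 C) as [|HC]; auto. exfalso.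
    assert (f 0 <= C * exp (- B)).
    { apply (rc_le f _ d Hf0 Hd). intros s Hs. destruct (H s (proj1 Hs)) as [Gs [-> HB]].
      specialize (HB (proj2 Hs)). apply Rabs_le_inv in HB.
      apply Rmult_le_compat_neg_l; [lra|]. apply exp_mono_le. lra. }
    pose proof (exp_pos (- B)). nra.
  - intros H0 t [Ht|Ht]; [|subst t; auto]. destruct (H t Ht) as [G [-> _]].
    pose proof (exp_pos G).
    destruct (Rle_dec C 0) as [|HC]; [nra|]. exfalso.
    assert (C * exp (- B) <= f 0).
    { apply (rc_ge f _ d Hf0 Hd). intros s Hs. destruct (H s (proj1 Hs)) as [Gs [-> HB]].
      specialize (HB (proj2 Hs)). apply Rabs_le_inv in HB.
      apply Rmult_le_compat_l; [lra|]. apply exp_mono_le. lra. }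
    pose proof (exp_pos (- B)). nra.
Qed.

Lemma mono_dec (f df : R -> R) : (forall x, 0 < x -> is_derive f x (df x)) ->
  (forall x, 0 < x -> df x <= 0) -> forall x y, 0 < x -> x <= y -> f y <= f x.
Proof.
  intros Hd Hp x y Hx Hxy.
  assert (H := mono (fun t => - f t) (fun t => - df t)).
  assert (- f x <= - f y); [|lra].
  apply H; auto.
  - intros t Ht. apply (is_derive_opp f). auto.
  - intros t Ht. specialize (Hp t Ht). lra.
Qed.

Lemma rc_ge_w (f : R -> R) c k d : filterlim f (at_right 0) (locally (f 0)) -> 0 < d -> 0 <= k ->
  (forall s, 0 < s < d -> c - k * s <= f s) -> c <= f 0.
Proof.
  intros H Hd Hk Hs. destruct (Rle_dec c (f 0)) as [|Hn]; auto. exfalso.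
  set (e := c - f 0).
  destruct (rc_near f H (e / 2)) as [d' [Hd' Hn']]; [unfold e; lra|].
  set (d2 := Rmin d d').
  assert (Hd2 : 0 < d2) by (apply Rmin_Rgt_r; lra).
  set (s := Rmin d2 (e / (2 * (k + 1))) / 2).
  assert (He : 0 < e / (2 * (k + 1))) by (apply Rdiv_lt_0_compat; unfold e; lra).
  pose proof (Rmin_l d2 (e / (2 * (k + 1)))). pose proof (Rmin_r d2 (e / (2 * (k + 1)))).
  pose proof (Rmin_Rgt_r d2 (e / (2 * (k + 1))) 0 (conj Hd2 He)).
  pose proof (Rmin_l d d'). pose proof (Rmin_r d d').
  assert (Hs0 : 0 < s) by (unfold s; lra).
  assert (Hs1 : s < d) by (unfold s, d2 in *; lra).
  assert (Hs2 : s < d') by (unfold s, d2 in *; lra).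
  assert (Hs3 : s * (2 * (k + 1)) <= e).
  { assert (s <= e / (2 * (k+1))) by (unfold s; lra).
    apply Rmult_le_compat_r with (r := 2 * (k+1)) in H5; [|lra].
    unfold Rdiv in H5. rewrite Rmult_assoc, Rinv_l in H5 by lra. lra. }
  specialize (Hs s (conj Hs0 Hs1)). specialize (Hn' s (conj Hs0 Hs2)).
  apply Rabs_def2 in Hn'. unfold e in *. nra.
Qed.

Lemma deriv_exp_lin k t : is_derive (fun t => exp (k * t)) t (k * exp (k * t)).
Proof.
  assert (H1 : is_derive (fun t : R => k * t) t (k * 1)) by (apply (is_derive_scal (fun t => t) t k 1); apply (is_derive_id t)).
  assert (H := is_derive_comp exp (fun t => k * t) t _ _ (is_derive_exp (k * t)) H1).
  replace (k * exp (k * t)) with (scal (k * 1) (exp (k * t))). exact H.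
  simpl. change (k * 1 * exp (k * t) = k * exp (k * t)). ring.
Qed.

Lemma odd_step (f g : R -> R) (lamc beta : R) :
  filterlim f (at_right 0) (locally (f 0)) ->
  (forall t, 0 < t -> is_derive f t (- lamc * f t * g t)) ->
  (forall t, 0 <= t -> 0 <= f t) ->
  0 <= beta ->
  (forall t, 0 < t -> beta <= lamc * g t) ->
  forall t, 0 <= t -> f t <= f 0 * exp (- beta * t).
Proof.
  intros Hf0 Hf Hpos Hb Hg t [Ht|Ht]; [|subst t; rewrite Rmult_0_r, exp_0; lra].
  set (h := fun t => f t * exp (beta * t)).
  assert (Hh : forall x, 0 < x -> is_derive h x (f x * exp (beta * x) * (beta - lamc * g x))).
  { intros x Hx. pose proof (is_derive_mult f (fun t => exp (beta * t)) x _ _ (Hf x Hx) (deriv_exp_lin beta x)) as H.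
    specialize (H (fun n m => Rmult_comm n m)).
    replace (f x * exp (beta * x) * (beta - lamc * g x)) with
      (plus (mult (- lamc * f x * g x) (exp (beta * x))) (mult (f x) (beta * exp (beta * x)))).
    exact H. simpl. change (- lamc * f x * g x * exp (beta * x) + f x * (beta * exp (beta * x)) = f x * exp (beta * x) * (beta - lamc * g x)). ring. }
  assert (Hmon := mono_dec h _ Hh).
  assert (Hle : forall x, 0 < x -> f x * exp (beta * x) * (beta - lamc * g x) <= 0).
  { intros x Hx. apply Rmult_le_0_l. apply Rmult_le_pos. apply Hpos; lra. left; apply exp_pos.
    specialize (Hg x Hx). lra. }
  specialize (Hmon Hle).
  set (X := h t).
  assert (HX0 : 0 <= X). { unfold X, h. apply Rmult_le_pos. apply Hpos; lra. left; apply exp_pos. }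
  assert (HX : X <= f 0).
  { apply (rc_ge_w f X (X * beta) t Hf0 Ht). apply Rmult_le_pos; auto.
    intros s Hs. assert (h t <= h s) by (apply Hmon; lra). unfold X; fold X in H.
    unfold h in H.
    assert (Hs1 : X * exp (- beta * s) <= f s).
    { replace (f s) with (f s * exp (beta * s) * exp (- beta * s)).
      apply Rmult_le_compat_r. left; apply exp_pos. auto.
      rewrite Rmult_assoc, <- exp_plus. replace (beta * s + - beta * s) with 0 by ring. rewrite exp_0; ring. }
    pose proof (exp_ineq1_le (- beta * s)). assert (X * (1 + - beta * s) <= X * exp (- beta * s)) by (apply Rmult_le_compat_l; auto). fold X. lra. }
  assert (f t = X * exp (- beta * t)).
  { unfold X, h. rewrite Rmult_assoc, <- exp_plus. replace (beta * t + - beta * t) with 0 by ring. rewrite exp_0; ring. }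
  rewrite H. apply Rmult_le_compat_r. left; apply exp_pos. auto.
Qed.

Lemma even_step (f g : R -> R) (lamc beta : R) :
  filterlim f (at_right 0) (locally (f 0)) ->
  (forall t, 0 < t -> is_derive f t (- lamc * f t * g t)) ->
  (forall t, 0 <= t -> 0 <= f t) ->
  0 <= beta ->
  (forall t, 0 < t -> lamc * g t <= / 2 * beta * exp (- beta * t)) ->
  forall t, 0 <= t -> f 0 * exp (- / 2) <= f t.
Proof.
  intros Hf0 Hf Hpos Hb Hg t Ht.
  assert (Hf00 := Hpos 0 (Rle_refl 0)).
  destruct Ht as [Ht|Ht]; [|subst t; pose proof (exp_ineq1_le (- /2)); pose proof (exp_pos (-/2));
     assert (exp (-/2) <= 1); [|nra]].
  2:{ destruct (Rle_dec (exp (-/2)) 1) as [|Hn]; auto. exfalso.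
      pose proof (exp_increasing (-/2) 0). rewrite exp_0 in H1. lra. }
  set (u := fun t => - / 2 * exp (- beta * t)).
  assert (Hu : forall x, is_derive u x (- / 2 * (- beta * exp (- beta * x)))).
  { intros x. apply (is_derive_scal (fun t => exp (- beta * t)) x (-/2)). apply deriv_exp_lin. }
  set (h := fun t => f t * exp (u t)).
  assert (Hh : forall x, 0 < x -> is_derive h x (f x * exp (u x) * (/ 2 * beta * exp (- beta * x) - lamc * g x))).
  { intros x Hx.
    assert (He := is_derive_comp exp u x _ _ (is_derive_exp (u x)) (Hu x)).
    pose proof (is_derive_mult f (fun t => exp (u t)) x _ _ (Hf x Hx) He) as H.
    specialize (H (fun n m => Rmult_comm n m)).
    replace (f x * exp (u x) * (/ 2 * beta * exp (- beta * x) - lamc * g x)) with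
      (plus (mult (- lamc * f x * g x) (exp (u x))) (mult (f x) (scal (- / 2 * (- beta * exp (- beta * x))) (exp (u x))))).
    exact H. simpl.
    change (- lamc * f x * g x * exp (u x) + f x * ((- / 2 * (- beta * exp (- beta * x))) * exp (u x)) = f x * exp (u x) * (/ 2 * beta * exp (- beta * x) - lamc * g x)). ring. }
  assert (Hmon := mono h _ Hh).
  assert (Hge : forall x, 0 < x -> 0 <= f x * exp (u x) * (/ 2 * beta * exp (- beta * x) - lamc * g x)).
  { intros x Hx. apply Rmult_le_pos. apply Rmult_le_pos. apply Hpos; lra. left; apply exp_pos.
    specialize (Hg x Hx). lra. }
  specialize (Hmon Hge).
  assert (Hht : 0 <= h t). { unfold h. apply Rmult_le_pos. apply Hpos; lra. left; apply exp_pos. }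
  assert (Hbd : f 0 <= h t * exp (/ 2)).
  { apply (rc_le f _ t Hf0 Ht). intros s Hs. assert (h s <= h t) by (apply Hmon; lra).
    unfold h in H.
    replace (f s) with (f s * exp (u s) * exp (- u s)).
    2:{ rewrite Rmult_assoc, <- exp_plus. replace (u s + - u s) with 0 by ring. rewrite exp_0; ring. }
    assert (exp (- u s) <= exp (/ 2)).
    { apply exp_mono_le. unfold u. assert (exp (- beta * s) <= 1).
      { rewrite <- exp_0. apply exp_mono_le. nra. }
      pose proof (exp_pos (- beta * s)). lra. }
    pose proof (exp_pos (- u s)). fold h in H |- *. 
    apply Rle_trans with (h s * exp (/2)).
    - unfold h. apply Rmult_le_compat_l; auto. apply Rmult_le_pos. apply Hpos; lra. left; apply exp_pos.
    - apply Rmult_le_compat_r; auto. left; apply exp_pos. }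
  assert (h t <= f t).
  { unfold h. assert (exp (u t) <= 1).
    { rewrite <- exp_0. apply exp_mono_le. unfold u. pose proof (exp_pos (- beta * t)). lra. }
    pose proof (Hpos t (or_introl Ht)). nra. }
  assert (f 0 * exp (- / 2) <= h t).
  { replace (h t) with (h t * exp (/ 2) * exp (- / 2)).
    apply Rmult_le_compat_r. left; apply exp_pos. auto.
    rewrite Rmult_assoc, <- exp_plus. replace (/2 + - /2) with 0 by ring. rewrite exp_0; ring. }
  lra.
Qed.

Lemma P1 j : lam (2 * j) * (/ 2) ^ (2 * j + 1) = / 2 * 4 ^ (2 * j).
Proof.
  unfold lam. rewrite pow_add, pow_1, <- Rmult_assoc, <- Rpow_mult_distr.
  replace (8 * / 2) with 4 by field. ring.
Qed.

Lemma P2 j : lam (2 * j + 1) * (/ 2 * (/ 2) ^ (2 * j + 2)) = 4 ^ (2 * j).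
Proof.
  unfold lam. rewrite !pow_add, pow_1.
  replace (8 ^ (2 * j) * 8 * (/ 2 * ((/ 2) ^ (2 * j) * (/ 2) ^ 2)))
    with ((8 ^ (2 * j) * (/ 2) ^ (2 * j)) * (8 * / 2 * (/2) ^ 2)) by ring.
  rewrite <- Rpow_mult_distr. replace (8 * / 2) with 4 by field. simpl. field.
Qed.

Lemma exp_half : / 2 <= exp (- / 2).
Proof.
  assert (H : exp (/ 2) * exp (/ 2) = exp 1) by (rewrite <- exp_plus; f_equal; field).
  pose proof exp_le_3. pose proof (exp_pos (/2)).
  assert (exp (/2) <= 2) by nra.
  rewrite exp_Ropp. apply Rinv_le_contravar; lra.
Qed.

Theorem proposition3p1 (N : nat) (m : nat -> R -> R) :
  (1 <= N)%nat ->
  is_solution m ->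
  initial_data N m ->
  forall t : R, 0 <= t ->
    (forall n : nat, (1 <= n)%nat -> m (2 * n)%nat t >= / 2 * m (2 * n)%nat 0) /\
    (forall n : nat, m (2 * n + 1)%nat t <= m (2 * n + 1)%nat 0 * exp (- (4 ^ (2 * n)) * t)).
Proof.
  intros HN Hsol [Hin0 Hin1].
  assert (Hrc : forall k, (1 <= k)%nat -> filterlim (m k) (at_right 0) (locally (m k 0)))
    by (intros k Hk; apply (Hsol k Hk)).
  assert (Hd : forall k, (1 <= k)%nat -> forall t, 0 < t -> is_derive (m k) t (- lam k * m k t * m (S k) t))
    by (intros k Hk; apply (Hsol k Hk)).
  assert (Hex : forall k, (1 <= k)%nat -> forall t, 0 < t -> ex_derive (m (S k)) t).
  { intros k Hk t Ht. eexists. apply (Hd (S k)); [lia|auto]. }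
  assert (Hsgn : forall k, (1 <= k)%nat ->
     (0 <= m k 0 -> forall t, 0 <= t -> 0 <= m k t) /\ (m k 0 <= 0 -> forall t, 0 <= t -> m k t <= 0)).
  { intros k Hk. apply (sign_lemma (m k) (m (S k)) (- lam k)); auto; apply Hrc; lia. }
  assert (Hm0 : forall k, (1 <= k)%nat -> 0 <= m k 0 <= (/ 2) ^ k).
  { intros k Hk. destruct (le_lt_dec k (2 * N)).
    - rewrite Hin0 by lia. split; [apply pow_le; lra| lra].
    - rewrite Hin1 by lia. split; [lra| apply pow_le; lra]. }
  assert (Hnn : forall k, (1 <= k)%nat -> forall t, 0 <= t -> 0 <= m k t).
  { intros k Hk. apply (Hsgn k Hk). apply Hm0; auto. }
  assert (Hz : forall k, (2 * N < k)%nat -> forall t, 0 <= t -> m k t = 0).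
  { intros k Hk t Ht. apply Rle_antisym.
    - apply (Hsgn k ltac:(lia)); auto. rewrite Hin1; auto; lra.
    - apply Hnn; auto; lia. }
  set (O := fun j => forall t, 0 <= t -> m (2 * j + 1)%nat t <= m (2 * j + 1)%nat 0 * exp (- (4 ^ (2 * j)) * t)).
  set (E := fun j => (1 <= j)%nat -> forall t, 0 <= t -> m (2 * j)%nat t >= / 2 * m (2 * j)%nat 0).
  assert (Ohigh : forall j, (N <= j)%nat -> O j).
  { intros j Hj t Ht. rewrite !Hz by (lia || lra); try lra. }
  assert (Ehigh : forall j, (N < j)%nat -> E j).
  { intros j Hj _ t Ht. rewrite !Hz by (lia || lra); try lra. }
  assert (EfromO : forall j, (j <= N)%nat -> O j -> E j).
  { intros j Hj HO Hj1 t Ht.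
    assert (H := even_step (m (2 * j)%nat) (m (2 * j + 1)%nat) (lam (2 * j)) (4 ^ (2 * j))).
    assert (Hle : / 2 * m (2 * j)%nat 0 <= m (2 * j)%nat 0 * exp (- / 2)).
    { pose proof exp_half. pose proof (Hnn (2 * j)%nat ltac:(lia) 0 (Rle_refl 0)). nra. }
    apply Rle_ge. eapply Rle_trans; [exact Hle|]. apply H; auto.
    - apply Hrc; lia.
    - intros s Hs. replace (2 * j + 1)%nat with (S (2 * j)) by lia. apply Hd; auto; lia.
    - intros s Hs. apply Hnn; auto; lia.
    - apply pow_le; lra.
    - intros s Hs. specialize (HO s (or_introl Hs)).
      rewrite <- P1. destruct (Hm0 (2 * j + 1)%nat ltac:(lia)) as [_ Hb].
      assert (Hl : 0 < lam (2 * j)) by (unfold lam; apply pow_lt; lra).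
      pose proof (exp_pos (- 4 ^ (2 * j) * s)).
      assert (m (2 * j + 1)%nat s <= (/ 2) ^ (2 * j + 1) * exp (- 4 ^ (2 * j) * s)).
      { eapply Rle_trans; [exact HO|]. apply Rmult_le_compat_r; lra. }
      replace (lam (2 * j) * (/ 2) ^ (2 * j + 1) * exp (- 4 ^ (2 * j) * s))
        with (lam (2 * j) * ((/ 2) ^ (2 * j + 1) * exp (- 4 ^ (2 * j) * s))) by ring.
      apply Rmult_le_compat_l; lra. }
  assert (OfromE : forall j, (j < N)%nat -> E (S j) -> O j).
  { intros j Hj HE t Ht.
    apply (odd_step (m (2 * j + 1)%nat) (m (2 * S j)%nat) (lam (2 * j + 1)) (4 ^ (2 * j))); auto.
    - apply Hrc; lia.
    - intros s Hs. replace (2 * S j)%nat with (S (2 * j + 1)) by lia. apply Hd; auto; lia.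
    - intros s Hs. apply Hnn; auto; lia.
    - apply pow_le; lra.
    - intros s Hs. specialize (HE ltac:(lia) s (Rlt_le _ _ Hs)).
      rewrite (Hin0 (2 * S j)%nat) in HE by lia. rewrite <- P2.
      replace (2 * j + 2)%nat with (2 * S j)%nat by lia.
      apply Rmult_le_compat_l. unfold lam; apply pow_le; lra. lra. }
  assert (All : forall i j, (N - i <= j)%nat -> O j /\ E j).
  { induction i as [|i IH]; intros j Hj.
    - assert (HO : O j) by (apply Ohigh; lia). split; [exact HO|].
      destruct (Nat.eq_dec j N) as [Heq|Hne].
      + exact (EfromO j ltac:(lia) HO).
      + exact (Ehigh j ltac:(lia)).
    - destruct (le_lt_dec (N - i) j) as [Hle|Hlt]; [apply IH; auto|].
      assert (HO : O j) by (apply OfromE; [lia| apply IH; lia]).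
      split; [exact HO| exact (EfromO j ltac:(lia) HO)]. }
  intros t Ht. split.
  - intros n Hn. apply (proj2 (All N n ltac:(lia))); auto.
  - intros n. apply (proj1 (All N n ltac:(lia))); auto.
Qed.
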